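(* Let $A$ be a CFG-ring and let $n,m\ge 1$. (1) A subset $U\subseteq A^{n}$ is an algebraic variety if and only if $U$, equipped with the restriction of the metric $d$ of $A^n$, is a CFG-space over $B(A)$. (2) If $U\subseteq A^{n}$ and $V\subseteq A^{m}$ are algebraic varieties, a map $f:U\to V$ is a polynomial map if and only if it is contractive, i.e. $d(f(x),f(y))\le d(x,y)$ for all $x,y\in U$.
   Context: All rings are commutative with identity. A regular ring is a commutative von Neumann regular ring: every principal ideal is generated by an idempotent. For a regular ring $A$, $B(A)$ denotes the set of idempotents of $A$, which is a Boolean ring with the product of $A$ and the sum $a\tilde{+}b=(a-b)^2$; in it $a\vee b=a+b-ab$, $a\le b\iff ab=a$, $\bar a=1-a$. For $a\in A$, $e(a)$ denotes the unique idempotent with $aA=e(a)A$. For pairwise disjoint idempotents $a_1,\dots,a_k$ (i.e. $a_ia_j=0$ for $i\ne j$), $a_1\oplus\cdots\oplus a_k$ denotes their sum (which equals their join). $A^n$ carries the map $d:A^n\times A^n\to B(A)$, $d((x_1,\dots,x_n),(y_1,\dots,y_n))=e(x_1-y_1)\vee\cdots\vee e(x_n-y_n)$, which is a Boolean metric over $B(A)$. A Boolean metric space over a Boolean ring $B$ is a set $X$ with $d:X\times X\to B$ such that $d(x,y)=0\iff x=y$, $d(x,y)=d(y,x)$, and $d(x,z)\le d(x,y)\vee d(y,z)$. Given $x_1,\dots,x_k\in X$ and $a_1,\dots,a_k\in B$ with $a_1\oplus\cdots\oplus a_k=1$, an element $x\in X$ is a convex combination of the $x_i$ with coefficients $a_i$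 if $a_i d(x,x_i)=0$ for all $i$ (such $x$ is unique if it exists). $X$ is convex if every such convex combination exists in $X$. A CFG-space is a metric space $X$ over $B$ which is convex and for which there is a finite subset $F\subseteq X$ such that every element of $X$ is a convex combination of elements of $F$. A CFG-ring is a regular ring $A$ such that $A$ with the metric $d(x,y)=e(x-y)$ is a CFG-space over $B(A)$ (e.g. every $p$-ring). An algebraic variety in $A^n$ is the set of common zeros of finitely many polynomials in $A[X_1,\dots,X_n]$. A map $f:U\to V$ between algebraic varieties $U\subseteq A^n$, $V\subseteq A^m$ is a polynomial map if there are $f_1,\dots,f_m\in A[X_1,\dots,X_n]$ with $f(x)=(f_1(x),\dots,f_m(x))$ for all $x\in U$. *)

(* Defs.v *)
From HB Require Import structures.
From mathcomp Require Import all_boot all_order all_algebra.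
From Stdlib Require Import ClassicalEpsilon.
Set Implicit Arguments. Unset Strict Implicit. Unset Printing Implicit Defensive.
Import GRing.Theory.
Local Open Scope ring_scope.

Section Defs.
Variable A : comPzRingType.

(* idempotents, i.e. elements of B(A) *)
Definition idem (a : A) : Prop := a * a = a.

Definition same_ideal (x e : A) : Prop :=
  (exists y, x = e * y) /\ (exists z, e = x * z).

Definition regular_ring : Prop :=
  forall x : A, exists e, idem e /\ same_ideal x e.

(* e(x): the (unique, for regular A) idempotent with xA = e(x)A *)
Definition eid (x : A) : A :=
  epsilon (inhabits 0) (fun e => idem e /\ same_ideal x e).

Definition bjoin (a b : A) : A := a + b - a * b.
Definition ble (a b : A) : Prop := a * b = a.

Definition bpartition (k : nat) (a : 'I_k -> A) : Prop :=
  (forall i, idem (a i)) /\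
  (forall i j, i != j -> a i * a j = 0) /\
  \sum_(i < k) a i = 1.

(* A Boolean metric space over B(A): carrier the subset S of T, metric d *)
Definition bmetric (T : Type) (S : T -> Prop) (d : T -> T -> A) : Prop :=
  (forall x y, S x -> S y -> idem (d x y)) /\
  (forall x y, S x -> S y -> (d x y = 0 <-> x = y)) /\
  (forall x y, S x -> S y -> d x y = d y x) /\
  (forall x y z, S x -> S y -> S z -> ble (d x z) (bjoin (d x y) (d y z))).

(* x is the convex combination of the xs i with coefficients a i *)
Definition conv_comb (T : Type) (d : T -> T -> A) (k : nat)
    (xs : 'I_k -> T) (a : 'I_k -> A) (x : T) : Prop :=
  forall i, a i * d x (xs i) = 0.

Definition convex (T : Type) (S : T -> Prop) (d : T -> T -> A) : Prop :=
  forall k (xs : 'I_k -> T) (a : 'I_k -> A),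
    (forall i, S (xs i)) -> bpartition a ->
    exists x, S x /\ conv_comb d xs a x.

Definition CFG_space (T : Type) (S : T -> Prop) (d : T -> T -> A) : Prop :=
  bmetric S d /\ convex S d /\
  exists p (F : 'I_p -> T), (forall j, S (F j)) /\
    forall x, S x -> exists k (xs : 'I_k -> T) (a : 'I_k -> A),
      (forall i, exists j, xs i = F j) /\ bpartition a /\ conv_comb d xs a x.

Definition CFG_ring : Prop :=
  regular_ring /\ CFG_space (fun _ : A => True) (fun x y => eid (x - y)).

Definition vec (n : nat) := 'I_n -> A.
Definition dvec (n : nat) (x y : vec n) : A :=
  \big[bjoin/0]_(i < n) eid (x i - y i).

(* polynomials in A[X_1,...,X_n], as formal expressions *)
Inductive mpoly (n : nat) : Type :=
| PVar of 'I_n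
| PConst of A
| PAdd of mpoly n & mpoly n
| PMul of mpoly n & mpoly n.

Fixpoint peval (n : nat) (p : mpoly n) (x : vec n) : A :=
  match p with
  | PVar i => x i
  | PConst c => c
  | PAdd p q => peval p x + peval q x
  | PMul p q => peval p x * peval q x
  end.

Definition algebraic_variety (n : nat) (U : vec n -> Prop) : Prop :=
  exists k (ps : 'I_k -> mpoly n),
    forall x, U x <-> (forall i, peval (ps i) x = 0).

Definition polynomial_map (n m : nat) (U : vec n -> Prop)
    (f : vec n -> vec m) : Prop :=
  exists fs : 'I_m -> mpoly n,
    forall x, U x -> forall j, f x j = peval (fs j) x.

Definition contractive (n m : nat) (U : vec n -> Prop)
    (f : vec n -> vec m) : Prop :=
  forall x y, U x -> U y -> ble (dvec (f x) (f y)) (dvec x y).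

End Defs.

(* Main.v *)
From HB Require Import structures.
From mathcomp Require Import all_boot all_order all_algebra.
From Stdlib Require Import ClassicalEpsilon Classical FunctionalExtensionality.
Require Import Defs.
Set Implicit Arguments. Unset Strict Implicit. Unset Printing Implicit Defensive.
Import GRing.Theory.
Local Open Scope ring_scope.

Section Basics.
Variable A : comPzRingType.

Lemma idem_compl (a : A) : idem a -> idem (1 - a).
Proof. rewrite /idem => h. by rewrite mulrBl mul1r mulrBr mulr1 h subrr subr0. Qed.

Lemma idem_mul (a b : A) : idem a -> idem b -> idem (a * b).
Proof. rewrite /idem => ha hb. by rewrite mulrACA ha hb. Qed.

Lemma idem_compl0 (a : A) : idem a -> a * (1 - a) = 0.
Proof. rewrite /idem => h. by rewrite mulrBr mulr1 h subrr. Qed.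

Lemma idem_prod (I : finType) (P : pred I) (F : I -> A) :
  (forall i, idem (F i)) -> idem (\prod_(i | P i) F i).
Proof.
move=> h; apply: (big_rec (fun x => idem x)); first by rewrite /idem mulr1.
by move=> i x _ hx; apply: idem_mul.
Qed.

Lemma prod_kill (I : finType) (P : pred I) (h : A) (e : I -> A) :
  (forall i, P i -> h * e i = 0) -> h * \prod_(i | P i) (1 - e i) = h.
Proof.
move=> H; apply: (big_rec (fun x => h * x = h)); first by rewrite mulr1.
move=> i x Pi hx. by rewrite mulrA mulrBr mulr1 H // subr0.
Qed.

Lemma prod_factor (I : finType) (P : pred I) (F : I -> A) j :
  P j -> \prod_(i | P i) F i = F j * \prod_(i | P i && (i != j)) F i.
Proof. move=> Pj; exact: (bigD1 j). Qed.

Lemma sum_factor (I : finType) (P : pred I) (F : I -> A) j :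
  P j -> \sum_(i | P i) F i = F j + \sum_(i | P i && (i != j)) F i.
Proof. move=> Pj; exact: (bigD1 j). Qed.

Lemma part_mul k (a : 'I_k -> A) (F : 'I_k -> A) j :
  bpartition a -> a j * \sum_(i < k) a i * F i = a j * F j.
Proof.
case=> hid [hor _]. rewrite (bigD1 j) //= mulrDr mulrA hid big_distrr /=.
rewrite big1 ?addr0 // => i hij.
by rewrite mulrA hor ?mul0r // eq_sym.
Qed.

Lemma part_eq k (a : 'I_k -> A) (y z : A) :
  bpartition a -> (forall j, a j * y = a j * z) -> y = z.
Proof.
case=> _ [_ hs] H.
have -> : y = \sum_(j < k) a j * y by rewrite -big_distrl /= hs mul1r.
have -> : z = \sum_(j < k) a j * z by rewrite -big_distrl /= hs mul1r.
by apply: eq_bigr => j _; apply: H.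
Qed.

End Basics.

Section Reg.
Variable A : comPzRingType.
Variable hreg : regular_ring A.

Lemma eid_spec (x : A) : idem (eid x) /\ same_ideal x (eid x).
Proof. exact: (@epsilon_spec A (inhabits 0) _ (hreg x)). Qed.

Lemma idem_uniq (x g g' : A) : idem g -> idem g' -> same_ideal x g -> same_ideal x g' -> g = g'.
Proof.
rewrite /idem => hg hg' [[y1 e1] [z1 f1]] [[y2 e2] [z2 f2]].
have h1 : g' * g = g by rewrite f1 e2 !mulrA hg'.
have h2 : g * g' = g' by rewrite f2 e1 !mulrA hg.
by rewrite -h1 mulrC h2.
Qed.

Lemma eid_uniq (x g : A) : idem g -> same_ideal x g -> eid x = g.
Proof. move=> hg hs; case: (eid_spec x) => h1 h2; exact: (idem_uniq h1 hg h2 hs). Qed.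

Lemma eid_idem (x : A) : idem (eid x).
Proof. by case: (eid_spec x). Qed.

Lemma kill_eid (h x : A) : h * eid x = 0 <-> h * x = 0.
Proof.
case: (eid_spec x) => _ [[y ey] [z ez]]; split => H.
  by rewrite ey mulrA H mul0r.
by rewrite ez mulrA H mul0r.
Qed.

Lemma eid0 : eid (0 : A) = 0.
Proof. apply: eid_uniq; first by rewrite /idem mulr0. split; exists 0; by rewrite mulr0. Qed.

Lemma eid_eq0 (x : A) : eid x = 0 -> x = 0.
Proof. move=> H. have : 1 * eid x = 0 by rewrite H mulr0. by move/kill_eid; rewrite mul1r. Qed.

Lemma eidN (x : A) : eid (- x) = eid x.
Proof.
apply: eid_uniq; first exact: eid_idem.
case: (eid_spec x) => _ [[y ey] [z ez]]; split.
  by exists (- y); rewrite {1}ey mulrN.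
by exists (- z); rewrite mulrNN -ez.
Qed.

Lemma eidB (x y : A) : eid (x - y) = eid (y - x).
Proof. by rewrite -opprB eidN. Qed.

Lemma idem_pow (g : A) M : idem g -> (0 < M)%N -> g ^+ M = g.
Proof.
move=> he; case: M => // M _; elim: M => [|M IH]; first by rewrite expr1.
by rewrite exprS IH he.
Qed.

Lemma reduced (y : A) M : (0 < M)%N -> y ^+ M = 0 -> y = 0.
Proof.
move=> HM Hy. case: (eid_spec y) => he [[w ew] [z ez]].
have : eid y = 0.
  rewrite -(idem_pow he HM).
  by rewrite ez exprMn Hy mul0r.
by move=> H0; rewrite ew H0 mul0r.
Qed.

End Reg.

Section Dvec.
Variable A : comPzRingType.
Variable hreg : regular_ring A.

Lemma bjoin_compl (a b : A) : 1 - bjoin a b = (1 - a) * (1 - b).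
Proof.
rewrite /bjoin mulrBl mul1r mulrBr mulr1 !opprD !opprK !addrA.
by rewrite [_ - a - b]addrAC.
Qed.

Lemma bjoin_def (a b : A) : bjoin a b = 1 - (1 - a) * (1 - b).
Proof. by rewrite -bjoin_compl opprB addrC subrK. Qed.

Lemma dvec_compl n (x y : vec A n) :
  1 - dvec x y = \prod_(i < n) (1 - eid (x i - y i)).
Proof.
rewrite /dvec. apply: (big_morph (fun z : A => 1 - z)).
  by move=> a b; rewrite bjoin_compl.
by rewrite subr0.
Qed.

Lemma dvec_def n (x y : vec A n) :
  dvec x y = 1 - \prod_(i < n) (1 - eid (x i - y i)).
Proof. by rewrite -dvec_compl opprB addrC subrK. Qed.

Lemma dvec_idem n (x y : vec A n) : idem (dvec x y).
Proof.
rewrite dvec_def; apply: idem_compl; apply: idem_prod => i.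
apply: idem_compl; exact: eid_idem.
Qed.

Lemma kill_dvec n (h : A) (x y : vec A n) :
  h * dvec x y = 0 <-> forall i, h * (x i - y i) = 0.
Proof.
rewrite dvec_def mulrBr mulr1; split.
  move/eqP; rewrite subr_eq0 => /eqP H i.
  apply/(kill_eid hreg). rewrite H (bigD1 i) //= mulrA mulrAC -(mulrA h).
  rewrite [(1 - _) * _]mulrC idem_compl0 ?mulr0 ?mul0r //; exact: eid_idem.
move=> H. rewrite prod_kill ?subrr // => i _.
by apply/(kill_eid hreg).
Qed.

Lemma ble_dvec n (D : A) (x y : vec A n) : idem D ->
  (ble (dvec x y) D <-> forall i, (1 - D) * (x i - y i) = 0).
Proof.
move=> hD. rewrite -kill_dvec /ble. rewrite mulrBl mul1r [D * _]mulrC; split.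
  by move=> ->; rewrite subrr.
by move/eqP; rewrite subr_eq0 => /eqP <-.
Qed.

Lemma dvec_eq0 n (x y : vec A n) : dvec x y = 0 <-> x = y.
Proof.
split.
  move=> H. have : 1 * dvec x y = 0 by rewrite H mulr0.
  move/kill_dvec => H2. apply: functional_extensionality => i.
  by apply/eqP; rewrite -subr_eq0 -(mul1r (x i - y i)) H2.
move=> ->. rewrite dvec_def big1 ?subrr // => i _.
by rewrite subrr (eid0 hreg) subr0.
Qed.

Lemma dvecC n (x y : vec A n) : dvec x y = dvec y x.
Proof. rewrite !dvec_def; congr (1 - _); apply: eq_bigr => i _; by rewrite (eidB hreg). Qed.

Lemma bmetric_vec n (S : vec A n -> Prop) : bmetric S (@dvec A n).
Proof.
split; first by move=> *; exact: dvec_idem.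
split; first by move=> *; exact: dvec_eq0.
split; first by move=> *; exact: dvecC.
move=> x y z _ _ _. have hD : idem (bjoin (dvec x y) (dvec y z)).
  rewrite bjoin_def; apply/idem_compl/idem_mul; apply/idem_compl; exact: dvec_idem.
apply/ble_dvec => // i.
have -> : x i - z i = (x i - y i) + (y i - z i) by rewrite addrA subrK.
rewrite bjoin_compl mulrDr.
have /kill_dvec H1 : (1 - dvec x y) * dvec x y = 0 by rewrite mulrC idem_compl0 //; exact: dvec_idem.
have /kill_dvec H2 : (1 - dvec y z) * dvec y z = 0 by rewrite mulrC idem_compl0 //; exact: dvec_idem.
by rewrite -!mulrA H2 mulr0 addr0 [(1 - dvec y z) * _]mulrC mulrA H1 mul0r.
Qed.
End Dvec.

Section Regroup.
Variable A : comPzRingType.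

Definition npart (T : Type) (d : T -> T -> A) p (F : 'I_p -> T) (x : T) :=
  exists b : 'I_p -> A, bpartition b /\ forall j, b j * d x (F j) = 0.

Lemma part_sub k (a : 'I_k -> A) (P : pred 'I_k) i : bpartition a ->
  a i * \sum_(i' | P i') a i' = if P i then a i else 0.
Proof.
case=> hid [hor _]. case: ifP => Pi.
  rewrite (bigD1 i) //= mulrDr hid big_distrr big1 ?addr0 //= => i' /andP [_ h].
  by rewrite hor // eq_sym.
rewrite big_distrr big1 //= => i' Pi'. rewrite hor //.
by apply/negP => /eqP E; move: Pi; rewrite E Pi'.
Qed.

Lemma regroup (T : Type) (d : T -> T -> A) p (F : 'I_p -> T) k (xs : 'I_k -> T)
  (a : 'I_k -> A) (x : T) :
  bpartition a -> (forall i, exists j, xs i = F j) -> conv_comb d xs a x ->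
  npart d F x.
Proof.
move=> ha hxs hc.
pose iota := fun i => proj1_sig (constructive_indefinite_description _ (hxs i)).
have Hiota : forall i, xs i = F (iota i).
  by move=> i; rewrite /iota; case: (constructive_indefinite_description _ _).
exists (fun j => \sum_(i | iota i == j) a i); split; last first.
  move=> j; rewrite big_distrl big1 //= => i /eqP <-.
  by rewrite -Hiota; apply: hc.
split.
  move=> j; rewrite /idem big_distrl /=; apply: eq_bigr => i hi.
  by rewrite part_sub // hi.
split.
  move=> j j' hjj'; rewrite big_distrl big1 //= => i /eqP hi.
  rewrite part_sub //; case: ifP => // /eqP h; move: hjj'.
  by rewrite -hi h eqxx.
case: ha => _ [_ hs]; rewrite -hs.
by rewrite [RHS](partition_big iota xpredT) //=.
Qed.

Lemma npart_prod0 n p (F : 'I_p -> vec A n) (x : vec A n) :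
  npart (@dvec A n) F x -> \prod_(j < p) dvec x (F j) = 0.
Proof.
case=> b [[_ [_ hs]] hb]. rewrite -[LHS]mul1r -hs big_distrl big1 //= => j _.
by rewrite (bigD1 j) //= mulrA hb mul0r.
Qed.

End Regroup.

Section Epow.
Variable A : comPzRingType.

Lemma cyc (c t : A) (k d M : nat) : (0 < d)%N -> c * t ^+ k = c * t ^+ (k + d) ->
  (k <= M)%N -> (d %| M)%N -> c * t ^+ (M + M) = c * t ^+ M.
Proof.
move=> hd hk hkM hdM.
have step : forall a, (k <= a)%N -> c * t ^+ (a + d) = c * t ^+ a.
  move=> a ha. have -> : (a + d = (k + d) + (a - k))%N.
    by rewrite addnAC subnKC.
  by rewrite exprD mulrA -hk -mulrA -exprD subnKC.
have stepq : forall q, c * t ^+ (M + q * d) = c * t ^+ M.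
  elim=> [|q IH]; first by rewrite mul0n addn0.
  by rewrite mulSn addnCA addnC step ?IH // (leq_trans hkM) // leq_addr.
by rewrite -{2}(divnK hdM) stepq.
Qed.

Lemma eid_pow : CFG_ring A -> exists M, (0 < M)%N /\ forall t : A, eid t = t ^+ M.
Proof.
case=> hreg [_ [_ [p [F [_ gen]]]]].
have np : forall t : A, npart (fun x y : A => eid (x - y)) F t.
  move=> t; case: (gen t I) => k [xs [a [hxs [ha hc]]]].
  exact: (regroup ha hxs hc).
exists (p.+1)`!; split; first exact: fact_gt0.
set N := p.+1; set M := N`!.
have hM : (0 < M)%N by exact: fact_gt0.
move=> t.
pose HB := fun k : 'I_N => constructive_indefinite_description _ (np (t ^+ k.+1)).
pose B := fun k => proj1_sig (HB k).
have HBk : forall k, bpartition (B k) /\ forall j, B k j * eid (t ^+ k.+1 - F j) = 0.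
  by move=> k; rewrite /B; case: (HB k).
have one : \sum_(s : {ffun 'I_N -> 'I_p}) \prod_(k < N) B k (s k) = 1.
  rewrite -bigA_distr_bigA big1 // => k _. by case: (HBk k) => [[_ [_ hs]] _].
have key : t ^+ (M + M) = t ^+ M.
  rewrite -[LHS]mul1r -[RHS]mul1r -one !big_distrl; apply: eq_bigr => s _.
  set c := \prod_(k < N) B k (s k).
  have hcB : forall k, c * B k (s k) = c.
    move=> k; rewrite /c (bigD1 k) //= mulrAC.
    by case: (HBk k) => [[hid _] _]; rewrite hid.
  have hcF : forall k : 'I_N, c * t ^+ k.+1 = c * F (s k).
    move=> k; rewrite -(hcB k) -!mulrA; congr (_ * _).
    case: (HBk k) => _ /(_ (s k)) /(kill_eid hreg) /eqP.
    by rewrite mulrBr subr_eq0 => /eqP.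
  have [k [l [hkl hne]]] : exists k l : 'I_N, s k = s l /\ k != l.
    apply: NNPP => H.
    have inj : injective s.
      move=> k l hkl; apply/eqP; apply: NNPP => hne; apply: H.
      by exists k, l; split => //; apply/negP.
    by have := @leq_card _ _ s inj; rewrite !card_ord ltnn.
  have E : c * t ^+ k.+1 = c * t ^+ l.+1 by rewrite !hcF hkl.
  have hkN : (k.+1 <= M)%N by rewrite (leq_trans (ltn_ord k)) // fact_geq.
  have hlN : (l.+1 <= M)%N by rewrite (leq_trans (ltn_ord l)) // fact_geq.
  case: (ltngtP k l) => hlt.
  - apply: (cyc (k := k.+1) (d := (l - k)%N)) => //.
    + by rewrite subn_gt0.
    + by rewrite E addSn subnKC // ltnW.
    + rewrite dvdn_fact // subn_gt0 hlt /=. rewrite (leq_trans (leq_subr _ _)) //.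
      exact: ltnW.
  - apply: (cyc (k := l.+1) (d := (k - l)%N)) => //.
    + by rewrite subn_gt0.
    + by rewrite -E addSn subnKC // ltnW.
    + rewrite dvdn_fact // subn_gt0 hlt /=. rewrite (leq_trans (leq_subr _ _)) //.
      exact: ltnW.
  - by move: hne; rewrite (val_inj hlt) eqxx.
have hg : idem (t ^+ M) by rewrite /idem -exprD key.
apply: (eid_uniq hreg hg); split.
  exists t. apply/eqP; rewrite -subr_eq0.
  have H0 : (t * (1 - t ^+ M)) ^+ M = 0.
    by rewrite exprMn (idem_pow (idem_compl hg) hM) idem_compl0.
  rewrite mulrC -{1}[t]mulr1 -mulrBr.
  by rewrite (reduced hreg hM H0).
exists (t ^+ M.-1). by rewrite -exprS prednK.
Qed.

End Epow.

Section Poly.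
Variable A : comPzRingType.
Variable n : nat.
Local Notation mp := (mpoly A n).
Local Notation pc := (@PConst A n).
Local Notation pa := (@PAdd A n).
Local Notation pm := (@PMul A n).

Definition psub (p q : mp) : mp := pa p (pm (pc (-1)) q).
Fixpoint ppow (p : mp) (k : nat) : mp :=
  match k with O => pc 1 | S k' => pm p (ppow p k') end.
Definition psum I (r : seq I) (F : I -> mp) : mp := \big[pa/pc 0]_(i <- r) F i.
Definition pprod I (r : seq I) (F : I -> mp) : mp := \big[pm/pc 1]_(i <- r) F i.

Lemma peval_sub p q x : peval (psub p q) x = peval p x - peval q x.
Proof. by rewrite /= mulN1r. Qed.

Lemma peval_pow p k x : peval (ppow p k) x = peval p x ^+ k.
Proof. elim: k => [|k IH] /=; first by rewrite expr0. by rewrite IH exprS. Qed.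

Lemma peval_sum I (r : seq I) F x : peval (psum r F) x = \sum_(i <- r) peval (F i) x.
Proof. rewrite /psum. by apply: (big_morph (fun p => peval p x)). Qed.

Lemma peval_prod I (r : seq I) F x : peval (pprod r F) x = \prod_(i <- r) peval (F i) x.
Proof. rewrite /pprod. by apply: (big_morph (fun p => peval p x)). Qed.

Lemma peval_cong (h : A) (x y : vec A n) (p : mp) :
  (forall i, h * (x i - y i) = 0) -> h * peval p x = h * peval p y.
Proof.
move=> H; elim: p => [i|c|p IHp q IHq|p IHp q IHq] //=.
- by apply/eqP; rewrite -subr_eq0 -mulrBr H.
- by rewrite !mulrDr IHp IHq.
- by rewrite mulrA IHp -mulrA mulrCA IHq mulrCA mulrA.
Qed.

Lemma split_eq (a L : A) : L = a * L + (1 - a) * L.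
Proof. by rewrite mulrBl mul1r addrC subrK. Qed.

Lemma peval_mix (a : A) (x y : vec A n) p : idem a ->
  peval p (fun i => a * x i + (1 - a) * y i) = a * peval p x + (1 - a) * peval p y.
Proof.
move=> ha. rewrite [LHS](split_eq a); congr (_ + _); apply: peval_cong => i.
  by rewrite /= mulrBr mulrDr !mulrA ha idem_compl0 // mul0r addr0 subrr.
have hb : (1 - a) * (1 - a) = 1 - a by exact: idem_compl.
by rewrite /= mulrBr mulrDr !mulrA [(1 - a) * a]mulrC idem_compl0 // mul0r add0r hb subrr.
Qed.

Lemma peval_conv k (a : 'I_k -> A) (xs : 'I_k -> vec A n) p : bpartition a ->
  peval p (fun i => \sum_(j < k) a j * xs j i) = \sum_(j < k) a j * peval p (xs j).
Proof.
move=> ha. have hs := ha; case: hs => _ [_ hs].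
rewrite -[LHS]mul1r -hs big_distrl /=; apply: eq_bigr => j _.
apply: peval_cong => i. by rewrite mulrBr part_mul // subrr.
Qed.

End Poly.

Section Refine.
Variable A : comPzRingType.
Variable n : nat.
Local Notation pc := (@PConst A n).
Local Notation pm := (@PMul A n).

Lemma refine p (G : 'I_p -> mpoly A n) : exists C : 'I_p -> mpoly A n,
  forall x, (forall j, idem (peval (G j) x)) ->
   (forall j, idem (peval (C j) x)) /\
   (forall j j', j != j' -> peval (C j) x * peval (C j') x = 0) /\
   (forall j, peval (C j) x * peval (G j) x = peval (C j) x) /\
   \sum_(j < p) peval (C j) x = 1 - \prod_(j < p) (1 - peval (G j) x).
Proof.
elim: p G => [|p IH] G.
  exists (fun _ => pc 0) => x _; split; first by case.
  split; first by case. split; first by case.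
  by rewrite !big_ord0 subrr.
case: (IH (fun j => G (lift ord0 j))) => C' HC'.
pose C := fun i => match unlift ord0 i with
  | Some j => pm (psub (pc 1) (G ord0)) (C' j) | None => G ord0 end.
have C0 : C ord0 = G ord0 by rewrite /C unlift_none.
have CS : forall j, C (lift ord0 j) = pm (psub (pc 1) (G ord0)) (C' j).
  by move=> j; rewrite /C liftK.
exists C => x hG.
case: (HC' x (fun j => hG _)) => hid [hor [hcg hs]].
have hg0 := hG ord0. set g0 := peval (G ord0) x in hg0 *.
have hb : (1 - g0) * (1 - g0) = 1 - g0 by exact: idem_compl.
have ev : forall j, peval (C (lift ord0 j)) x = (1 - g0) * peval (C' j) x.
  by move=> j; rewrite CS /= mulN1r.
have ev0 : peval (C ord0) x = g0 by rewrite C0.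
split.
  move=> i; case: (unliftP ord0 i) => [j ->|->]; last by rewrite ev0.
  rewrite ev; apply: idem_mul => //; exact: idem_compl.
split.
  move=> i i'; case: (unliftP ord0 i) => [j ->|->];
    case: (unliftP ord0 i') => [j' ->|->] hne.
  - rewrite !ev mulrACA hb hor ?mulr0 //.
  - by rewrite ev ev0 mulrAC [(1 - g0) * g0]mulrC idem_compl0 // mul0r.
  - by rewrite ev ev0 mulrA idem_compl0 // mul0r.
  - by rewrite eqxx in hne.
split.
  move=> i; case: (unliftP ord0 i) => [j ->|->]; last by rewrite ev0 hg0.
  by rewrite ev -mulrA hcg.
rewrite big_ord_recl. rewrite (@big_ord_recl A 0%R +%R p (fun j => peval (C j) x)) ev0.
under eq_bigr do rewrite ev.
rewrite -big_distrr /= hs mulrBr mulr1 addrA addrC.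
by rewrite [g0 + _]addrC subrK addrC.
Qed.

End Refine.

Section Main.
Variable A : comPzRingType.
Variable hA : CFG_ring A.

Lemma sum_enum (T : finType) (F : T -> A) :
  \sum_(j < #|T|) F (enum_val j) = \sum_(c : T) F c.
Proof. by rewrite -(big_enum_val (A := T)). Qed.

Lemma var_CFG n (U : vec A n -> Prop) : algebraic_variety U -> CFG_space U (@dvec A n).
Proof.
case: hA => hreg [_ [_ [p [FA [_ genA]]]]].
case=> k [ps hps].
split; first exact: bmetric_vec.
split.
  move=> kk xs a hxs ha. exists (fun i => \sum_(j < kk) a j * xs j i). split.
    apply/hps => q. rewrite peval_conv // big1 // => j _.
    by rewrite (proj1 (hps _) (hxs j)) mulr0.
  move=> j. apply/(kill_dvec hreg) => i. by rewrite mulrBr part_mul // subrr.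
case: (classic (exists v, U v)) => [[v hv]|hne]; last first.
  exists 0%N, (fun _ => fun _ => 0). split; first by case.
  by move=> x hx; exfalso; apply: hne; exists x.
pose T := {ffun 'I_n -> 'I_p}.
pose cv := fun (c : T) (i : 'I_n) => FA (c i).
pose ac := fun c : T => \prod_(q < k) (1 - eid (peval (ps q) (cv c))).
pose uc := fun (c : T) (i : 'I_n) => ac c * cv c i + (1 - ac c) * v i.
have ac_idem : forall c, idem (ac c).
  move=> c; apply: idem_prod => q; apply: idem_compl; exact: eid_idem.
have Uuc : forall c, U (uc c).
  move=> c; apply/hps => q. rewrite peval_mix // (proj1 (hps v) hv q) mulr0 addr0.
  apply/(kill_eid hreg). rewrite /ac (bigD1 q) //= mulrAC [(1 - _) * _]mulrC.
  by rewrite idem_compl0 ?mul0r //; exact: eid_idem.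
exists #|T|, (fun j => uc (enum_val j)). split; first by move=> j; apply: Uuc.
move=> x hx.
have npx : forall i, npart (fun a b : A => eid (a - b)) FA (x i).
  move=> i; case: (genA (x i) I) => kk [xs [a [hxs [ha hc]]]].
  exact: (regroup ha hxs hc).
pose HB := fun i => constructive_indefinite_description _ (npx i).
pose b := fun i => proj1_sig (HB i).
have Hb : forall i, bpartition (b i) /\ forall j, b i j * eid (x i - FA j) = 0.
  by move=> i; rewrite /b; case: (HB i).
pose beta := fun c : T => \prod_(i < n) b i (c i).
have beta_b : forall c i, beta c * b i (c i) = beta c.
  move=> c i; rewrite /beta (bigD1 i) //= mulrAC.
  by case: (Hb i) => [[hid _] _]; rewrite hid.
exists #|T|, (fun j => uc (enum_val j)), (fun j => beta (enum_val j)).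
split; first by move=> i; exists i.
split.
  split.
    move=> j; apply: idem_prod => i. by case: (Hb i) => [[hid _] _].
  split.
    move=> j j' hjj'.
    have hne : enum_val j != enum_val j'.
      by apply: contra_neq hjj' => /enum_val_inj.
    have [i hi] : exists i, enum_val j i != enum_val j' i.
      apply: NNPP => H; move: hne; rewrite -[_ != _]/(~~ _) => /negP; apply.
      apply/eqP/ffunP => i; apply/eqP; apply: NNPP => H2; apply: H; exists i.
      exact/negP.
    rewrite -(beta_b _ i) -(beta_b (enum_val j') i) mulrACA.
    by case: (Hb i) => [[_ [hor _]] _]; rewrite hor ?mulr0.
  rewrite (sum_enum beta) /beta -bigA_distr_bigA big1 // => i _.
  by case: (Hb i) => [[_ [_ hs]] _].
move=> j. set c := enum_val j.
have hbx : forall i, beta c * (x i - cv c i) = 0.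
  move=> i. rewrite -(beta_b c i) -mulrA.
  by case: (Hb i) => _ /(_ (c i)) /(kill_eid hreg) ->; rewrite mulr0.
have hq : forall q, beta c * eid (peval (ps q) (cv c)) = 0.
  move=> q; apply/(kill_eid hreg).
  by rewrite -(peval_cong _ hbx) (proj1 (hps x) hx q) mulr0.
have hba : beta c * ac c = beta c by apply: prod_kill => q _; apply: hq.
apply/(kill_dvec hreg) => i. rewrite /uc mulrBr mulrDr !mulrA hba.
rewrite mulrBr mulr1 hba subrr mul0r addr0 -mulrBr; exact: hbx.
Qed.

End Main.

Section Main2.
Variable A : comPzRingType.
Variable hA : CFG_ring A.
Variable n : nat.
Local Notation pc := (@PConst A n).
Local Notation pm := (@PMul A n).
Local Notation pv := (@PVar A n).

Lemma one_sub_sub (d : A) : 1 - (1 - d) = d.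
Proof. by rewrite opprB addrC subrK. Qed.

Definition Gpoly (M : nat) (u : vec A n) : mpoly A n :=
  pprod (index_enum 'I_n) (fun i => psub (pc 1) (ppow (psub (pv i) (pc (u i))) M)).

Lemma Gpoly_ev M (hM : forall t : A, eid t = t ^+ M) u x :
  peval (Gpoly M u) x = 1 - dvec x u.
Proof.
case: hA => hreg _.
rewrite /Gpoly peval_prod dvec_compl; apply: eq_bigr => i _.
by rewrite peval_sub peval_pow peval_sub /= hM.
Qed.

Lemma gen_cover (U : vec A n -> Prop) p (F : 'I_p -> vec A n) :
  (forall x, U x -> exists k (xs : 'I_k -> vec A n) (a : 'I_k -> A),
      (forall i, exists j, xs i = F j) /\ bpartition a /\ conv_comb (@dvec A n) xs a x) ->
  forall x, U x -> \prod_(j < p) dvec x (F j) = 0.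
Proof.
move=> gen x hx; case: (gen x hx) => k [xs [a [hxs [ha hc]]]].
exact: npart_prod0 (regroup ha hxs hc).
Qed.

Lemma refine_dvec M (hM : forall t : A, eid t = t ^+ M) p (F : 'I_p -> vec A n) :
  exists C : 'I_p -> mpoly A n, forall x,
   (forall j, idem (peval (C j) x)) /\
   (forall j j', j != j' -> peval (C j) x * peval (C j') x = 0) /\
   (forall j, peval (C j) x * dvec x (F j) = 0) /\
   \sum_(j < p) peval (C j) x = 1 - \prod_(j < p) dvec x (F j).
Proof.
case: hA => hreg _.
case: (refine (fun j => Gpoly M (F j))) => C HC.
exists C => x.
have hG : forall j, idem (peval (Gpoly M (F j)) x).
  move=> j; rewrite Gpoly_ev //; apply: idem_compl; exact: dvec_idem.
case: (HC x hG) => hid [hor [hcg hs]].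
split => //; split => //; split.
  move=> j; move: (hcg j); rewrite Gpoly_ev // mulrBr mulr1 => h.
  by rewrite -[X in X = 0](subKr (peval (C j) x)) h subrr.
rewrite hs; congr (1 - _); apply: eq_bigr => j _.
by rewrite Gpoly_ev // one_sub_sub.
Qed.

Lemma CFG_var (U : vec A n -> Prop) : CFG_space U (@dvec A n) -> algebraic_variety U.
Proof.
have hreg := proj1 hA.
case: (eid_pow hA) => M [hM0 hM].
case=> _ [hconv [p [F [hF gen]]]].
case: (refine_dvec hM F) => C HC.
exists 1%N, (fun _ => pprod (index_enum 'I_p) (fun j => psub (pc 1) (Gpoly M (F j)))).
move=> x.
have ev : peval (pprod (index_enum 'I_p) (fun j => psub (pc 1) (Gpoly M (F j)))) x
          = \prod_(j < p) dvec x (F j).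
  rewrite peval_prod; apply: eq_bigr => j _.
  by rewrite peval_sub Gpoly_ev //= one_sub_sub.
rewrite ev; split.
  by move=> hx _; exact: (gen_cover gen hx).
move=> /(_ ord0) h0.
case: (HC x) => hid [hor [hcd hs]].
have hpart : bpartition (fun j => peval (C j) x).
  by split => //; split => //; rewrite hs h0 subr0.
case: (hconv p F _ hF hpart) => y [hy hc].
suff -> : x = y by [].
apply: functional_extensionality => i.
apply: (part_eq hpart) => j /=.
move: (hcd j) => /(kill_dvec hreg) /(_ i) h1.
move: (hc j) => /(kill_dvec hreg) /(_ i) h2.
apply/eqP; rewrite -subr_eq0 -mulrBr.
have -> : x i - y i = (x i - F j i) - (y i - F j i).
  by rewrite opprB addrA subrK.
by rewrite mulrBr h1 h2 subrr.
Qed.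

Lemma poly_contr m (U : vec A n -> Prop) (f : vec A n -> vec A m) :
  polynomial_map U f -> contractive U f.
Proof.
have hreg := proj1 hA.
case=> fs hfs x y hx hy.
have hD : idem (dvec x y) by exact: dvec_idem.
have hxy : forall i, (1 - dvec x y) * (x i - y i) = 0.
  by apply/(ble_dvec hreg) => //; rewrite /ble hD.
apply/(ble_dvec hreg) => // j.
rewrite !hfs // mulrBr (peval_cong _ hxy) subrr //.
Qed.

Lemma contr_poly m (U : vec A n -> Prop) (f : vec A n -> vec A m) :
  algebraic_variety U -> contractive U f -> polynomial_map U f.
Proof.
have hreg := proj1 hA.
move=> /var_CFG hU hc.
case: (eid_pow hA) => M [hM0 hM].
case: (hU hA) => _ [_ [p [F [hF gen]]]].
case: (refine_dvec hM F) => C HC.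
exists (fun j => psum (index_enum 'I_p) (fun l => pm (C l) (pc (f (F l) j)))).
move=> x hx j.
case: (HC x) => hid [hor [hcd hs]].
have hpart : bpartition (fun l => peval (C l) x).
  by split => //; split => //; rewrite hs (gen_cover gen hx) subr0.
rewrite peval_sum.
apply: (part_eq hpart) => l /=.
rewrite (part_mul (fun l => f (F l) j) l hpart).
have hle := hc x (F l) hx (hF l).
have hk : peval (C l) x * dvec (f x) (f (F l)) = 0.
  by rewrite -hle mulrA mulrAC hcd mul0r.
move: hk => /(kill_dvec hreg) /(_ j) /eqP.
by rewrite mulrBr subr_eq0 => /eqP.
Qed.

End Main2.

Theorem mainTheorem1 (A : comPzRingType) (hA : CFG_ring A) (n m : nat)
    (hn : (0 < n)%N) (hm : (0 < m)%N) :
  (forall U : vec A n -> Prop,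
     algebraic_variety U <-> CFG_space U (@dvec A n)) /\
  (forall (U : vec A n -> Prop) (V : vec A m -> Prop) (f : vec A n -> vec A m),
     algebraic_variety U -> algebraic_variety V ->
     (forall x, U x -> V (f x)) ->
     (polynomial_map U f <-> contractive U f)).
Proof.
split.
  move=> U; split; [exact: var_CFG | exact: CFG_var].
move=> U V f hU _ _; split; [exact: poly_contr | exact: contr_poly].
Qed.
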